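(* Let $S$ be an entropy function for a finite set $X$, let $X'\subset X$, and let $R$ be a new element not in $X$, with $Y:=X'\cup\{R\}$. Define $T$ on $2^Y$ by $T(A):=S(A)$ and $T(A\cup\{R\}):=S(A\cup(X\setminus X'))$ for all $A\subseteq X'$. Then $T$ is an entropy function for $Y$. Moreover, for any EDF $f$ for $S$, the function $g:Y\to\mathbb R$ given by $g(x)=f(x)$ for $x\in X'$ and $g(R)=\sum_{x\in X\setminus X'}f(x)$ is an EDF for $T$.
   Context: An entropy function for a finite set $X$ is a function $S:2^X\to[0,\infty)$ with $S(\emptyset)=0$, $S(A)+S(B)\ge S(A\cap B)+S(A\cup B)$ and $S(A)+S(B)\ge S(A\setminus B)+S(B\setminus A)$ for all $A,B\subseteq X$. An entanglement distribution function (EDF) for $S$ is a function $f:X\to\mathbb R$ with $\big|\sum_{x\in A}f(x)\big|\le S(A)$ for all $A\subseteq X$. *)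

(* Defs.v *)
From HB Require Import structures.
From mathcomp Require Import all_boot all_order all_algebra.
Set Implicit Arguments. Unset Strict Implicit. Unset Printing Implicit Defensive.
Import Order.TTheory GRing.Theory Num.Theory.
Local Open Scope ring_scope.

Definition entropy_function (R : realFieldType) (X : finType)
  (S : {set X} -> R) : Prop :=
  [/\ S set0 = 0,
      (forall A, 0 <= S A),
      (forall A B, S (A :&: B) + S (A :|: B) <= S A + S B) &
      (forall A B, S (A :\: B) + S (B :\: A) <= S A + S B)].

Definition EDF (R : realFieldType) (X : finType) (S : {set X} -> R)
  (f : X -> R) : Prop :=
  forall A : {set X}, `|\sum_(x in A) f x| <= S A.

Definition subX (X : finType) (X' : {set X}) : finType := {x : X | x \in X'}.

(* Y := X' ∪ {R}: the new element R is [None], x ∈ X' is [Some x]. *)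
Definition Yty (X : finType) (X' : {set X}) : finType := option (subX X').

Definition inX' (X : finType) (X' : {set X}) (B : {set Yty X'}) : {set X} :=
  [set x in X' | [exists y : subX X', (val y == x) && (Some y \in B)]].

(* T(A) = S(A),  T(A ∪ {R}) = S(A ∪ (X \ X'))  for A ⊆ X'. *)
Definition Tfun (R : realFieldType) (X : finType) (S : {set X} -> R)
  (X' : {set X}) (B : {set Yty X'}) : R :=
  S (inX' B :|: (if None \in B then ~: X' else set0)).

Definition gfun (R : realFieldType) (X : finType) (f : X -> R)
  (X' : {set X}) (y : Yty X') : R :=
  match y with
  | Some x => f (val x)
  | None => \sum_(x in ~: X') f x
  end.

Arguments Tfun {R X} S X' B.
Arguments gfun {R X} f X' y.

(* Main.v *)
Require Import Defs.
From mathcomp Require Import all_boot all_order all_algebra.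
Import Order.TTheory GRing.Theory Num.Theory.
Local Open Scope ring_scope.

Section H.
Variables (X : finType) (X' : {set X}).

Definition proj (x : X) : Yty X' := insub x.

Lemma phiE (B : {set Yty X'}) :
  inX' B :|: (if None \in B then ~: X' else set0) = [set x | proj x \in B].
Proof.
apply/setP => x; rewrite /inX' /proj !inE.
case: insubP => [y hx vy|hx].
  rewrite hx /=; have -> : [exists y0 : subX X', (val y0 == x) && (Some y0 \in B)] = (Some y \in B).
    apply/existsP/idP => [[z /andP [/eqP hz]]|h]; last by exists y; rewrite vy eqxx h.
    by have -> : z = y by apply: val_inj; rewrite hz vy.
  by case: (None \in B); rewrite ?inE ?hx ?orbF.
rewrite (negbTE hx) /=; by case: (None \in B); rewrite ?inE ?hx.
Qed.

Definition phi (B : {set Yty X'}) : {set X} := [set x | proj x \in B].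

Lemma phiI A B : phi (A :&: B) = phi A :&: phi B.
Proof. by apply/setP => x; rewrite !inE. Qed.
Lemma phiU A B : phi (A :|: B) = phi A :|: phi B.
Proof. by apply/setP => x; rewrite !inE. Qed.
Lemma phiD A B : phi (A :\: B) = phi A :\: phi B.
Proof. by apply/setP => x; rewrite !inE. Qed.
Lemma phi0 : phi set0 = set0.
Proof. by apply/setP => x; rewrite !inE. Qed.

Lemma sum_phi (R : realFieldType) (f : X -> R) (B : {set Yty X'}) :
  \sum_(y in B) gfun f X' y = \sum_(x in phi B) f x.
Proof.
rewrite (partition_big proj (mem B)) /=; last by move=> i; rewrite inE.
apply: eq_bigr => y yB; case: y yB => [y|] yB /=.
  rewrite (big_pred1 (val y)) // => x /=; rewrite inE /proj.
  case: insubP => [z hx vz|hx] /=.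
    rewrite -vz; apply/andP/eqP => [[_ /eqP [->]]|/val_inj ->] //; by rewrite yB eqxx.
  by rewrite andbF; apply/esym/eqP => hxy; rewrite hxy (valP y) in hx.
apply: eq_bigl => x; rewrite !inE /proj.
case: insubP => [z hx vz|hx] /=; first by rewrite hx andbF.
by rewrite hx andbT.
Qed.
End H.

Theorem proposition23 (R : realFieldType) (X : finType) (S : {set X} -> R)
  (X' : {set X}) :
  entropy_function S ->
  entropy_function (Tfun S X') /\
  (forall f : X -> R, EDF S f -> EDF (Tfun S X') (gfun f X')).
Proof.
case=> h0 hpos hsub hdiff.
have TE (B : {set Yty X'}) : Tfun S X' B = S (@phi _ X' B) by rewrite /Tfun phiE.
split.
  split => [|A|A B|A B]; rewrite ?TE ?phi0 ?phiI ?phiU ?phiD //.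
move=> f hf B; rewrite TE sum_phi; exact: hf.
Qed.
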